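(* Let $k\ge1$, let $A_k$ be the matrix defined below, let $\mathbf{b}\in\mathbb{Z}^{2k+1}$ and let $s\in[l(\mathbf{b}),u(\mathbf{b})]$ be an integer. Then the induced subgraph of $G_{A_k,\mathbf{b},\mathcal{G}(A_k)}$ on the vertex set $C_s(\mathbf{b})$ equals the induced subgraph of $G_{A_k,\mathbf{b},\mathcal{R}_{\mathrm{lex}}(A_k)}$ on $C_s(\mathbf{b})$.
   Context: $I_k$ is the $k\times k$ identity, $\mathbf{1}_k$ the all-ones vector in $\mathbb{Z}^k$. Define $$A_k=\begin{pmatrix} I_k & I_k & 0 & 0 & -\mathbf{1}_k & \mathbf{0}\\ 0&0&I_k&I_k&\mathbf{0}&-\mathbf{1}_k\\ 0&0&0&0&1&1\end{pmatrix}\in\mathbb{Z}^{(2k+1)\times(4k+2)}$$ (zero blocks of appropriate sizes; last two columns are single columns). Fiber: $\mathcal{F}_A(\mathbf{b})=\{\mathbf{u}\in\mathbb{Z}^n_{\ge0}:A\mathbf{u}=\mathbf{b}\}$; for $\mathcal{M}\subset\mathbb{Z}^n$, $G_{A,\mathbf{b},\mathcal{M}}$ is the graph on $\mathcal{F}_A(\mathbf{b})$ with distinct $\mathbf{u},\mathbf{v}$ adjacent iff $\mathbf{u}-\mathbf{v}\in\pm\mathcal{M}$. The Graver basis $\mathcal{G}(A)$ is the set of $\sqsubseteq$-minimal elements of $(\ker A\cap\mathbb{Z}^n)\setminus\{\mathbf{0}\}$, where $\mathbf{u}\sqsubseteq\mathbf{v}$ iff $u_iv_i\ge0$ and $|u_i|\le|v_i|$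 for all $i$. The toric ideal is $I_A=\langle\mathbf{x}^{\mathbf{u}^+}-\mathbf{x}^{\mathbf{u}^-}:\mathbf{u}\in\ker A\cap\mathbb{Z}^n\rangle$; $\prec_{\mathrm{lex}}$ is the lexicographic term order ($\mathbf{u}\prec_{\mathrm{lex}}\mathbf{v}$ iff $u_i<v_i$ at the first differing index); $\mathcal{R}_{\mathrm{lex}}(A)$ is the set of $\mathbf{u}$ such that $\mathbf{x}^{\mathbf{u}^+}-\mathbf{x}^{\mathbf{u}^-}$ (leading term $\mathbf{x}^{\mathbf{u}^+}$) lies in the reduced Gröbner basis of $I_A$ w.r.t. $\prec_{\mathrm{lex}}$. For $\mathbf{b}=(\mathbf{w}_1,\mathbf{w}_2,c)$ with $\mathbf{w}_1,\mathbf{w}_2\in\mathbb{Z}^k$, $c\in\mathbb{Z}$: $\mathbf{w}^-$ has entries $\max(-w_i,0)$, $l(\mathbf{b}):=\|\mathbf{w}_1^-\|_\infty$, $u(\mathbf{b}):=c-\|\mathbf{w}_2^-\|_\infty$, and $C_s(\mathbf{b}):=\{\mathbf{u}\in\mathcal{F}_{A_k}(\mathbf{b}):u_{4k+1}=s\}$. *)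

(* Defs.v *)
From HB Require Import structures.
From mathcomp Require Import all_boot all_order all_algebra.
From mathcomp Require Import mpoly.
Set Implicit Arguments. Unset Strict Implicit. Unset Printing Implicit Defensive.
Import Order.TTheory GRing.Theory Num.Theory.
Local Open Scope ring_scope.

(* Integer vectors are column vectors 'cV[int]_n; indices are 0-based. *)

(* The matrix A_k in Z^{(2k+1) x (4k+2)} (0-based rows/columns):
   rows 0..k-1   : I_k in columns 0..k-1 and k..2k-1, -1 in column 4k
   rows k..2k-1  : I_k in columns 2k..3k-1 and 3k..4k-1, -1 in column 4k+1
   row 2k        : 1 in columns 4k and 4k+1. *)
Definition A_entry (k i j : nat) : int :=
  if (i < k)%N then
    (if (j == i)%N || (j == i + k)%N then 1
     else if (j == 4 * k)%N then -1 else 0)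
  else if (i < 2 * k)%N then
    (if (j == i + k)%N || (j == i + 2 * k)%N then 1
     else if (j == 4 * k + 1)%N then -1 else 0)
  else
    (if (j == 4 * k)%N || (j == 4 * k + 1)%N then 1 else 0).

Definition A_mat (k : nat) : 'M[int]_(2 * k + 1, 4 * k + 2) :=
  \matrix_(i < 2 * k + 1, j < 4 * k + 2) A_entry k i j.

(* entry i (0-based, as a nat) of a column vector; 0 out of range *)
Definition vat (m : nat) (v : 'cV[int]_m) (i : nat) : int :=
  match @insub nat (fun j => (j < m)%N) _ i with
  | Some j => v j 0
  | None => 0
  end.

Definition in_fiber (m n : nat) (A : 'M[int]_(m, n)) (b : 'cV[int]_m)
  (u : 'cV[int]_n) : Prop :=
  (forall i, 0 <= u i 0) /\ A *m u = b.

Definition fiber_adj (m n : nat) (A : 'M[int]_(m, n)) (b : 'cV[int]_m)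
  (M : 'cV[int]_n -> Prop) (u v : 'cV[int]_n) : Prop :=
  in_fiber A b u /\ in_fiber A b v /\ u <> v /\ (M (u - v) \/ M (v - u)).

Definition conf_le (n : nat) (u v : 'cV[int]_n) : Prop :=
  forall i, 0 <= u i 0 * v i 0 /\ `|u i 0| <= `|v i 0|.

Definition in_lattice (m n : nat) (A : 'M[int]_(m, n)) (u : 'cV[int]_n) : Prop :=
  A *m u = 0.

Definition graver (m n : nat) (A : 'M[int]_(m, n)) (u : 'cV[int]_n) : Prop :=
  in_lattice A u /\ u <> 0 /\
  forall v, in_lattice A v -> v <> 0 -> conf_le v u -> v = u.

Definition ppart (x : int) : nat := absz (Num.max x 0).

Definition posm (n : nat) (u : 'cV[int]_n) : 'X_{1..n} :=
  [multinom ppart (u i ord0) | i < n].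
Definition negm (n : nat) (u : 'cV[int]_n) : 'X_{1..n} :=
  [multinom ppart (- u i ord0) | i < n].

Definition binom (K : fieldType) (n : nat) (u : 'cV[int]_n) : {mpoly K[n]} :=
  'X_[posm u] - 'X_[negm u].

Arguments binom K {n} u.

Definition in_ideal (K : fieldType) (n : nat) (S : {mpoly K[n]} -> Prop)
  (f : {mpoly K[n]}) : Prop :=
  exists r : seq ({mpoly K[n]} * {mpoly K[n]}),
    (forall x, x \in r -> S x.2) /\ f = \sum_(x <- r) x.1 * x.2.

Definition toric_ideal (K : fieldType) (m n : nat) (A : 'M[int]_(m, n))
  (f : {mpoly K[n]}) : Prop :=
  in_ideal (fun g => exists u, in_lattice A u /\ g = binom K u) f.

Arguments toric_ideal K {m n} A f.

Definition lex_lt (n : nat) (m1 m2 : 'X_{1..n}) : bool :=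
  [exists i : 'I_n, (m1 i < m2 i)%N &&
     [forall j : 'I_n, (j < i)%N ==> (m1 j == m2 j)]].
Definition lex_le (n : nat) (m1 m2 : 'X_{1..n}) : bool :=
  (m1 == m2) || lex_lt m1 m2.

Definition is_LM (K : fieldType) (n : nat) (p : {mpoly K[n]}) (mm : 'X_{1..n})
  : Prop :=
  mm \in msupp p /\ forall m', m' \in msupp p -> lex_le m' mm.

Definition mdivides (n : nat) (a b : 'X_{1..n}) : bool :=
  [forall i : 'I_n, (a i <= b i)%N].

(* G is the reduced Groebner basis of the ideal I w.r.t. lex:
   - G subset I, and <LT(I)> = <LT(G)> (every leading monomial of a nonzero
     element of I is divisible by the leading monomial of some g in G);
   - every g in G has leading coefficient 1;
   - for g in G, no monomial of g lies in <LT(G - {g})>. *)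
Definition is_reduced_GB (K : fieldType) (n : nat) (I : {mpoly K[n]} -> Prop)
  (G : seq {mpoly K[n]}) : Prop :=
  (forall g, g \in G -> I g) /\
  (forall f, I f -> f != 0 -> forall mf, is_LM f mf ->
      exists g, exists mg, [/\ g \in G, is_LM g mg & mdivides mg mf]) /\
  (forall g, g \in G -> exists mg, is_LM g mg /\ g@_mg = 1) /\
  (forall g g', g \in G -> g' \in G -> g' != g ->
      forall mg', is_LM g' mg' -> forall mm, mm \in msupp g ->
        ~~ mdivides mg' mm).

Definition R_lex (K : fieldType) (m n : nat) (A : 'M[int]_(m, n))
  (u : 'cV[int]_n) : Prop :=
  exists G, is_reduced_GB (toric_ideal K A) G /\
    binom K u \in G /\ is_LM (binom K u) (posm u).

Arguments R_lex K {m n} A u.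

(* b = (w1, w2, c):  w1 = entries 0..k-1, w2 = entries k..2k-1, c = entry 2k *)
Definition l_b (k : nat) (b : 'cV[int]_(2 * k + 1)) : int :=
  \big[Num.max/0]_(i < k) Num.max (- vat b i) 0.
Definition u_b (k : nat) (b : 'cV[int]_(2 * k + 1)) : int :=
  vat b (2 * k)%N - \big[Num.max/0]_(i < k) Num.max (- vat b (k + i)%N) 0.

(* C_s(b) = { u in F_{A_k}(b) : u_{4k+1} = s }  (u_{4k+1} is 0-based index 4k) *)
Definition C_s (k : nat) (b : 'cV[int]_(2 * k + 1)) (s : int)
  (u : 'cV[int]_(4 * k + 2)) : Prop :=
  in_fiber (A_mat k) b u /\ vat u (4 * k)%N = s.

(* Main.v *)
Require Import Defs.
From HB Require Import structures.
From mathcomp Require Import all_boot all_order all_algebra.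
From mathcomp Require Import mpoly zify ring.
Import Order.TTheory GRing.Theory Num.Theory.
Set Implicit Arguments. Unset Strict Implicit. Unset Printing Implicit Defensive.
Local Open Scope ring_scope.

Section Lex.
Variable N : nat.
Implicit Types m : 'X_{1..N}.

Lemma lex_ltP m1 m2 : lex_lt m1 m2 <->
  exists i : 'I_N, (m1 i < m2 i)%N /\ forall j : 'I_N, (j < i)%N -> m1 j = m2 j.
Proof.
split.
  by case/existsP => i /andP[h /forallP H]; exists i; split => // j hj;
    apply/eqP; exact: (implyP (H j) hj).
case=> i [h H]; apply/existsP; exists i; rewrite h /=.
by apply/forallP => j; apply/implyP => hj; rewrite H.
Qed.

Lemma lex_lt_asym m1 m2 : lex_lt m1 m2 -> lex_lt m2 m1 -> False.
Proof.
move=> /lex_ltP [i [h1 H1]] /lex_ltP [j [h2 H2]].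
case: (ltngtP i j) => hij.
- by move: h1; rewrite H2 // ltnn.
- by move: h2; rewrite H1 // ltnn.
- have e : i = j by apply: val_inj.
  by subst j; move: (ltn_trans h1 h2); rewrite ltnn.
Qed.

Lemma lex_lt_irr m : lex_lt m m -> False.
Proof. by move=> h; exact: (lex_lt_asym h h). Qed.

Lemma lex_le_antisym m1 m2 : lex_le m1 m2 -> lex_le m2 m1 -> m1 = m2.
Proof.
rewrite /lex_le; case: eqP => [//|_] /= h1; case: eqP => [//|_] /= h2.
by case: (lex_lt_asym h1 h2).
Qed.

Lemma LM_uniq (K : fieldType) (p : {mpoly K[N]}) m1 m2 :
  is_LM p m1 -> is_LM p m2 -> m1 = m2.
Proof. by case=> h1 H1 [h2 H2]; apply: lex_le_antisym; [apply: H2|apply: H1]. Qed.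

Lemma binom_coef (K : fieldType) a b m : a != b ->
  ('X_[a] - 'X_[b] : {mpoly K[N]})@_m = (a == m)%:R - (b == m)%:R.
Proof. by move=> _; rewrite mcoeffB !mcoeffX. Qed.

Lemma binom_msupp (K : fieldType) a b m : a != b ->
  (m \in msupp ('X_[a] - 'X_[b] : {mpoly K[N]})) = (m == a) || (m == b).
Proof.
move=> ab; rewrite mcoeff_msupp binom_coef //.
case: (eqVneq m a) => [e|ma]; first by rewrite e [b == a]eq_sym (negbTE ab) /= mulr1n mulr0n subr0 oner_eq0.
case: (eqVneq m b) => [_|mb]; first by rewrite /= mulr1n mulr0n sub0r oppr_eq0 oner_eq0.
by rewrite /= mulr0n subr0 eqxx.
Qed.

Lemma binom_LM (K : fieldType) a b : lex_lt b a ->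
  is_LM ('X_[a] - 'X_[b] : {mpoly K[N]}) a /\ ('X_[a] - 'X_[b] : {mpoly K[N]})@_a = 1.
Proof.
move=> h; have ab : a != b by apply/eqP => e; subst; exact: lex_lt_irr h.
split; last by rewrite binom_coef // eqxx eq_sym (negbTE ab) subr0.
split; first by rewrite binom_msupp // eqxx.
by move=> m; rewrite binom_msupp // => /orP[]/eqP ->; rewrite /lex_le ?eqxx ?h ?orbT.
Qed.

End Lex.

Section Basics.
Variable k : nat.
Hypothesis hk : (1 <= k)%N.
Local Notation n := (4 * k + 2)%N.

Lemma n_gt0 : (0 < n)%N. Proof. by rewrite addn2. Qed.
Definition o0 : 'I_n := Ordinal n_gt0.
Definition ix (j : nat) : 'I_n := insubd o0 j.
Lemma ixK j : (j < n)%N -> val (ix j) = j.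
Proof. by move=> h; rewrite /ix val_insubd h. Qed.
Lemma ix_val (i : 'I_n) : ix i = i.
Proof. by apply: val_inj; rewrite ixK. Qed.

Lemma vatE (v : 'cV[int]_n) (i : 'I_n) : vat v i = v i 0.
Proof. by rewrite /vat; case: insubP => [j _ /val_inj -> //|]; rewrite ltn_ord. Qed.
Lemma vat_out (m : nat) (v : 'cV[int]_m) j : (m <= j)%N -> vat v j = 0.
Proof. by move=> h; rewrite /vat insubF // ltnNge h. Qed.
Lemma vat_ix (v : 'cV[int]_n) j : (j < n)%N -> vat v j = v (ix j) 0.
Proof. by move=> h; rewrite -vatE ixK. Qed.
Lemma vatB m (u v : 'cV[int]_m) j : vat (u - v) j = vat u j - vat v j.
Proof. by rewrite /vat; case: insubP => [i _ _|_]; rewrite ?mxE ?subr0. Qed.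
Lemma vatN m (u : 'cV[int]_m) j : vat (- u) j = - vat u j.
Proof. by rewrite /vat; case: insubP => [i _ _|_]; rewrite ?mxE ?oppr0. Qed.
Lemma vat0 m j : vat (0 : 'cV[int]_m) j = 0.
Proof. by rewrite /vat; case: insubP => [i _ _|_]; rewrite ?mxE. Qed.

Lemma sum_ind m (v : 'cV[int]_m) (a : nat) :
  \sum_(j < m) ((j == a :> nat)%:R * v j 0) = vat v a.
Proof.
case: (ltnP a m) => ha.
  rewrite (bigD1 (Ordinal ha)) //= eqxx mul1r big1 ?addr0.
    by rewrite /vat; case: insubP => [j' _ /= e|]; [have -> : j' = Ordinal ha by apply: val_inj|rewrite ha].
  move=> j; rewrite -val_eqE /= => hj; case: eqP => [e|]; last by rewrite mul0r.
  by rewrite e eqxx in hj.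
rewrite vat_out // big1 // => j _; case: eqP => [e|]; last by rewrite mul0r.
by have := ltn_ord j; rewrite e ltnNge ha.
Qed.

Lemma entry_comb (i j : nat) : (i < 2 * k + 1)%N ->
  A_entry k i j =
  if (i < k)%N then (j == i)%:R + (j == (i + k)%N)%:R - (j == (4 * k)%N)%:R
  else if (i < 2 * k)%N then (j == (i + k)%N)%:R + (j == (i + 2 * k)%N)%:R - (j == (4 * k + 1)%N)%:R
  else (j == (4 * k)%N)%:R + (j == (4 * k + 1)%N)%:R.
Proof.
move=> hi; rewrite /A_entry.
case: ifP => h1; [|case: ifP => h2];
  do ![case: eqP => ?]; try (by []); lia.
Qed.

Lemma rowA (v : 'cV[int]_n) (i : 'I_(2 * k + 1)) : (A_mat k *m v) i 0 =
  if (i < k)%N then vat v i + vat v (i + k)%N - vat v (4 * k)%N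
  else if (i < 2 * k)%N then vat v (i + k)%N + vat v (i + 2 * k)%N - vat v (4 * k + 1)%N
  else vat v (4 * k)%N + vat v (4 * k + 1)%N.
Proof.
rewrite mxE; under eq_bigr do rewrite mxE entry_comb //.
case: ifP => _; [|case: ifP => _];
  rewrite -?sum_ind -?big_split -?sumrB /=; apply: eq_bigr => j _;
  ring.
Qed.


Lemma vat_col (F : nat -> int) j : (forall j, (n <= j)%N -> F j = 0) ->
  vat (\col_(l < n) F l) j = F j.
Proof.
move=> H; case: (ltnP j n) => hj; last by rewrite vat_out // H.
by rewrite vat_ix // mxE ixK.
Qed.

Definition mv (a b : nat) : 'cV[int]_n := \col_(j < n) ((j == a :> nat)%:R - (j == b :> nat)%:R).
Definition d3 : 'cV[int]_n := \col_(j < n) ((j == (4 * k)%N :> nat)%:R + ((k <= j < 2 * k)%N)%:R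
   - (j == (4 * k + 1)%N :> nat)%:R - ((3 * k <= j < 4 * k)%N)%:R).
Definition pairP (a b : nat) := (exists i, (i < k)%N /\ a = i /\ b = (k + i)%N) \/
  (exists i, (i < k)%N /\ a = (2 * k + i)%N /\ b = (3 * k + i)%N).

Lemma vat_mv a b j : (a < n)%N -> (b < n)%N -> vat (mv a b) j = (j == a)%:R - (j == b)%:R.
Proof.
move=> ha hb; rewrite /mv (@vat_col (fun l => (l == a)%:R - (l == b)%:R)) // => l hl.
by do 2!(case: eqP => ?); rewrite ?subrr //; lia.
Qed.

Lemma vat_d3 j : vat d3 j = (j == (4 * k)%N)%:R + ((k <= j < 2 * k)%N)%:R
   - (j == (4 * k + 1)%N)%:R - ((3 * k <= j < 4 * k)%N)%:R.
Proof.
rewrite /d3 (@vat_col (fun j => (j == (4 * k)%N)%:R + ((k <= j < 2 * k)%N)%:R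
   - (j == (4 * k + 1)%N)%:R - ((3 * k <= j < 4 * k)%N)%:R)) // => l hl.
have h1 : (l == (4 * k)%N) = false by apply/negbTE/eqP; lia.
have h2 : (l == (4 * k + 1)%N) = false by apply/negbTE/eqP; lia.
have h3 : (k <= l < 2 * k)%N = false by lia.
have h4 : (3 * k <= l < 4 * k)%N = false by lia.
by rewrite h1 h2 h3 h4 /= !mulr0n !subr0 ?addr0.
Qed.

Lemma pair_lt a b : pairP a b -> [/\ (a < b)%N, (b < 4 * k)%N & (a < n)%N /\ (b < n)%N].
Proof. by case=> [[i [hi [-> ->]]]|[i [hi [-> ->]]]]; split; lia. Qed.

Lemma pair_uniq a b a' b' : pairP a b -> pairP a' b' ->
  [|| a == a', a == b', b == a' | b == b'] -> a = a' /\ b = b'.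
Proof.
case=> [[i [hi [-> ->]]]|[i [hi [-> ->]]]] [[i' [hi' [-> ->]]]|[i' [hi' [-> ->]]]];
  do ![case: eqP => ?]; simpl; try done; lia.
Qed.

Lemma mv_lat a b : pairP a b -> A_mat k *m mv a b = 0.
Proof.
move=> hp; have [_ _ [ha hb]] := pair_lt hp.
apply/matrixP => r c; rewrite ord1 rowA !vat_mv // mxE.
have hr := ltn_ord r.
case: hp => [[i [hi [-> ->]]]|[i [hi [-> ->]]]];
  case: ifP => ?; try case: ifP => ?; do ![case: eqP => ?]; try (by []); lia.
Qed.

Lemma vat_d3E j : vat d3 j =
  if (j < k)%N then 0 else if (j < 2 * k)%N then 1 else if (j < 3 * k)%N then 0
  else if (j < 4 * k)%N then -1 else if j == (4 * k)%N then 1 else if j == (4 * k + 1)%N then -1 else 0.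
Proof.
rewrite vat_d3.
case E1: (j == (4 * k)%N); case E2: (k <= j < 2 * k)%N; case E3 : (j == (4 * k + 1)%N);
  case E4: (3 * k <= j < 4 * k)%N; do ![case: ifP => ?]; try (by []); lia.
Qed.

Lemma d3_lat : A_mat k *m d3 = 0.
Proof.
apply/matrixP => r c; rewrite ord1 rowA !vat_d3E mxE.
have hr := ltn_ord r.
do ![case: ifP => ?]; try (by []); lia.
Qed.

Lemma eq_vat (u v : 'cV[int]_n) : (forall l, (l < n)%N -> vat u l = vat v l) -> u = v.
Proof.
move=> H; apply/matrixP => i j; rewrite ord1 -!vatE; exact: H.
Qed.

Lemma vatZ m c (v : 'cV[int]_m) j : vat (c *: v) j = c * vat v j.
Proof. by rewrite /vat; case: insubP => [i _ _|_]; rewrite ?mxE ?mulr0. Qed.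

Lemma lat_rows (d : 'cV[int]_n) : A_mat k *m d = 0 ->
  [/\ (forall i, (i < k)%N -> vat d i + vat d (k + i)%N - vat d (4 * k)%N = 0),
      (forall i, (i < k)%N -> vat d (2 * k + i)%N + vat d (3 * k + i)%N - vat d (4 * k + 1)%N = 0)
    & vat d (4 * k)%N + vat d (4 * k + 1)%N = 0].
Proof.
move=> H; split.
- move=> i hi; have hr : (i < 2 * k + 1)%N by lia.
  have := congr1 (fun M : 'cV[int]_(2 * k + 1) => M (Ordinal hr) 0) H; rewrite rowA mxE /= hi.
  by rewrite [(i + k)%N]addnC.
- move=> i hi; have hr : (k + i < 2 * k + 1)%N by lia.
  have := congr1 (fun M : 'cV[int]_(2 * k + 1) => M (Ordinal hr) 0) H; rewrite rowA mxE /=.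
  rewrite (_ : (k + i < k)%N = false); last by lia.
  rewrite (_ : (k + i < 2 * k)%N = true); last by lia.
  by rewrite (_ : (k + i + k = 2 * k + i)%N); [rewrite (_ : (k + i + 2 * k = 3 * k + i)%N)|]; lia.
- have hr : (2 * k < 2 * k + 1)%N by lia.
  have := congr1 (fun M : 'cV[int]_(2 * k + 1) => M (Ordinal hr) 0) H; rewrite rowA mxE /=.
  by rewrite (_ : (2 * k < k)%N = false) ?ltnn //; lia.
Qed.

Lemma fiber_pairs (d : 'cV[int]_n) : A_mat k *m d = 0 -> vat d (4 * k)%N = 0 ->
  vat d (4 * k + 1)%N = 0 /\ forall a b, pairP a b -> vat d a + vat d b = 0.
Proof.
move=> H h4; have [H1 H2 H3] := lat_rows H.
have h5 : vat d (4 * k + 1)%N = 0 by move: H3; rewrite h4 add0r.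
split => // a b [[i [hi [-> ->]]]|[i [hi [-> ->]]]].
  by move: (H1 i hi); rewrite h4 subr0.
by move: (H2 i hi); rewrite h5 subr0.
Qed.

Lemma cover l : (l < n)%N -> l = (4 * k)%N \/ l = (4 * k + 1)%N \/
  exists a b, pairP a b /\ (l = a \/ l = b).
Proof.
move=> hl.
case: (ltnP l k) => h1.
  by right; right; exists l, (k + l); split; [left; exists l|left].
case: (ltnP l (2 * k)) => h2.
  by right; right; exists (l - k)%N, l; split; [left; exists (l - k)%N; split; lia|right].
case: (ltnP l (3 * k)) => h3.
  by right; right; exists l, (l + k)%N; split; [right; exists (l - 2 * k)%N; split; lia|left].
case: (ltnP l (4 * k)) => h4.
  by right; right; exists (l - k)%N, l; split; [right; exists (l - 3 * k)%N; split; lia|right].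
lia.
Qed.

Lemma nz_pair (d : 'cV[int]_n) : A_mat k *m d = 0 -> vat d (4 * k)%N = 0 -> d <> 0 ->
  exists a b, pairP a b /\ vat d a != 0.
Proof.
move=> H h4 nz; have [h5 HP] := fiber_pairs H h4.
have [l hl] : exists l, (l < n)%N /\ vat d l != 0.
  case: (pickP (fun i : 'I_n => d i 0 != 0)) => [i hi|H0].
    by exists i; rewrite vatE.
  exfalso; apply: nz; apply/matrixP => i j; rewrite ord1 mxE.
  by move/negbFE/eqP: (H0 i).
case: hl => hl nzl.
case: (cover hl) => [e|[e|[a [b [hp [e|e]]]]]]; subst.
- by rewrite h4 eqxx in nzl.
- by rewrite h5 eqxx in nzl.
- by exists a, b.
- exists a, b; split => //; move: (HP _ _ hp) => e; apply/eqP => ea.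
  by move: e; rewrite ea add0r => /eqP; rewrite (negbTE nzl).
Qed.


Lemma conf_vat (v d : 'cV[int]_n) : conf_le v d <->
  forall l, (l < n)%N -> 0 <= vat v l * vat d l /\ `|vat v l| <= `|vat d l|.
Proof.
split; first by move=> H l hl; rewrite !vat_ix //; apply: H.
by move=> H i; rewrite -!vatE; apply: H.
Qed.

Lemma graver_mv a b : pairP a b -> graver (A_mat k) (mv a b).
Proof.
move=> hp; have [ab b4 [ha hb]] := pair_lt hp.
have ba : (b == a) = false by rewrite gtn_eqF.
have ab' : (a == b) = false by rewrite ltn_eqF.
split; first exact: mv_lat.
split.
  move=> e; have := congr1 (fun v => vat v a) e.
  by rewrite vat_mv // vat0 eqxx ab' /= mulr1n mulr0n subr0 => /eqP; rewrite oner_eq0.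
move=> v hv nz hc; have Hc := (conf_vat v (mv a b)).1 hc.
have Hoff : forall l, (l < n)%N -> l != a -> l != b -> vat v l = 0.
  move=> l hl la lb; have [_] := Hc l hl.
  by rewrite vat_mv // (negbTE la) (negbTE lb) /= mulr0n subr0; lia.
have h4 : vat v (4 * k)%N = 0 by apply: Hoff; rewrite ?gtn_eqF //; lia.
have [h5 HP] := fiber_pairs hv h4.
have sab := HP a b hp.
have va : vat v a = 1.
  have [] := Hc a ha; rewrite vat_mv // eqxx ab' /= mulr1n mulr0n subr0.
  case: (eqVneq (vat v a) 0) => [z|nz']; last by lia.
  exfalso; apply: nz; apply: eq_vat => l hl; rewrite vat0.
  case: (eqVneq l a) => [->//|la]; case: (eqVneq l b) => [->|lb]; last exact: Hoff.
  by move: sab; rewrite z add0r.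
apply: eq_vat => l hl; rewrite vat_mv //.
case: (eqVneq l a) => [->|la]; first by rewrite va ?eqxx ab' /= mulr1n mulr0n subr0.
case: (eqVneq l b) => [->|lb]; first by rewrite ?ba /= mulr1n mulr0n sub0r; lia.
by rewrite /= mulr0n subr0 Hoff.
Qed.

Lemma graver_char (d : 'cV[int]_n) : A_mat k *m d = 0 -> vat d (4 * k)%N = 0 ->
  graver (A_mat k) d -> exists a b, pairP a b /\ (d = mv a b \/ d = - mv a b).
Proof.
move=> hA h4 [_ [nz H]].
have [a [b [hp hna]]] := nz_pair hA h4 nz.
have [h5 HP] := fiber_pairs hA h4.
have sab := HP a b hp.
have [ab b4 [ha hb]] := pair_lt hp.
have ba : (b == a) = false by rewrite gtn_eqF.
have ab' : (a == b) = false by rewrite ltn_eqF.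
pose c : int := if 0 < vat d a then 1 else -1.
have hc : c = 1 \/ c = -1 by rewrite /c; case: ifP; [left|right].
have pos : 0 < c * vat d a by rewrite /c; case: ifP => h; lia.
have e : c *: mv a b = d.
  apply: H.
  - by rewrite /in_lattice -scalemxAr mv_lat // scaler0.
  - move=> e0; have := congr1 (fun v => vat v a) e0.
    rewrite vatZ vat_mv // vat0 eqxx ab' /= mulr1n mulr0n subr0; lia.
  - apply/conf_vat => l hl; rewrite vatZ vat_mv //.
    case: (eqVneq l a) => [->|la]; first by rewrite ?eqxx ab' /= mulr1n mulr0n subr0; lia.
    case: (eqVneq l b) => [->|lb]; first by rewrite ?ba /= mulr1n mulr0n sub0r; lia.
    by rewrite /= mulr0n subr0 mulr0 mul0r normr0; split.
exists a, b; split => //.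
by case: hc => hc; [left|right]; rewrite -e hc ?scale1r ?scaleN1r.
Qed.


Variable K : fieldType.
Local Notation r := (2 * k + 1)%N.

Lemma r_gt0 : (0 < r)%N. Proof. by rewrite addn1. Qed.
Definition ir (t : nat) : 'I_r := insubd (Ordinal r_gt0) t.
Lemma irK t : (t < r)%N -> val (ir t) = t.
Proof. by move=> h; rewrite /ir val_insubd h. Qed.

Definition Aent (t j : nat) : nat :=
  if (t < k)%N then ((j == t) || (j == k + t) || (j == 4 * k + 1))%N
  else if (t < 2 * k)%N then ((j == t + k) || (j == t + 2 * k) || (j == 4 * k))%N
  else ((j == 4 * k) || (j == 4 * k + 1))%N.

Definition colm (j : 'I_n) : 'X_{1..r} := [multinom Aent t j | t < r].
Definition hX (j : 'I_n) : {mpoly K[r]} := 'X_[colm j].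
Definition psi (p : {mpoly K[n]}) : {mpoly K[r]} := mmap (@mpolyC r K) hX p.
Definition img (m : 'X_{1..n}) : 'X_{1..r} :=
  [multinom (\sum_(j < n) Aent t j * m j)%N | t < r].

Lemma mmap1_img m : mmap1 hX m = 'X_[img m].
Proof.
rewrite /mmap1 /hX mprodXnE; congr ('X_[_]); apply/mnmP => t.
rewrite mnm_sumE mnmE; apply: eq_bigr => j _.
by rewrite mulmnE mnmE mulnC.
Qed.

Lemma sum_indn (m : 'X_{1..n}) a : (a < n)%N ->
  (\sum_(j < n) ((j == a :> nat) * m j))%N = m (ix a).
Proof.
move=> ha; rewrite (bigD1 (ix a)) //= ixK // eqxx mul1n big1 ?addn0 //.
move=> j hj; case: eqP => [e|]; last by rewrite mul0n.
by move: hj; rewrite -val_eqE /= ixK // e eqxx.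
Qed.

Lemma img_row (m : 'X_{1..n}) t : (t < r)%N -> img m (ir t) =
  if (t < k)%N then (m (ix t) + m (ix (k + t)) + m (ix (4 * k + 1)))%N
  else if (t < 2 * k)%N then (m (ix (t + k)) + m (ix (t + 2 * k)) + m (ix (4 * k)))%N
  else (m (ix (4 * k)) + m (ix (4 * k + 1)))%N.
Proof.
move=> ht; rewrite mnmE irK //.
have E : forall j, Aent t j =
  if (t < k)%N then ((j == t) + (j == k + t) + (j == 4 * k + 1))%N
  else if (t < 2 * k)%N then ((j == t + k) + (j == t + 2 * k) + (j == 4 * k))%N
  else ((j == 4 * k) + (j == 4 * k + 1))%N.
  move=> j; rewrite /Aent.
  case: ifP => ?; [|case: ifP => ?]; do ![case: eqP => ?]; try (by []); lia.
under eq_bigr do rewrite E.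
case: ifP => _; [|case: ifP => _];
  rewrite -?sum_indn; try lia;
  rewrite -?big_split /=; apply: eq_bigr => j _; rewrite ?mulnDl //.
Qed.



Lemma ppart_diff (x : int) : (ppart x)%:Z - (ppart (- x))%:Z = x.
Proof. rewrite /ppart; lia. Qed.

Lemma posmE (u : 'cV[int]_n) j : (j < n)%N -> posm u (ix j) = ppart (vat u j).
Proof. by move=> h; rewrite /posm mnmE vat_ix. Qed.
Lemma negmE (u : 'cV[int]_n) j : (j < n)%N -> negm u (ix j) = ppart (- vat u j).
Proof. by move=> h; rewrite /negm mnmE vat_ix. Qed.

Lemma ir_val (t : 'I_r) : ir t = t.
Proof. by apply: val_inj; rewrite irK. Qed.

Lemma img_pos_neg (u : 'cV[int]_n) : A_mat k *m u = 0 -> img (posm u) = img (negm u).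
Proof.
move=> hA; have [H1 H2 H3] := lat_rows hA.
apply/mnmP => t; rewrite -(ir_val t) !img_row //.
have P j : (j < n)%N -> (posm u (ix j))%:Z = (negm u (ix j))%:Z + vat u j.
  by move=> hj; rewrite posmE // negmE //; have := ppart_diff (vat u j); lia.
have Pq := P (4 * k + 1)%N ltac:(lia).
have Pp := P (4 * k)%N ltac:(lia).
case: ifP => h1; [|case: ifP => h2].
- have := H1 t h1; have := P t ltac:(lia); have := P (k + t)%N ltac:(lia); lia.
- have := H2 (t - k)%N ltac:(lia).
  rewrite (_ : (2 * k + (t - k) = t + k)%N); last by lia.
  rewrite (_ : (3 * k + (t - k) = t + 2 * k)%N); last by lia.
  have := P (t + k)%N ltac:(lia); have := P (t + 2 * k)%N ltac:(lia); lia.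
- lia.
Qed.



Lemma psiX m : psi 'X_[m] = 'X_[img m].
Proof. by rewrite /psi mmapX mmap1_img. Qed.

Lemma psi_binom (u : 'cV[int]_n) : A_mat k *m u = 0 -> psi (binom K u) = 0.
Proof.
move=> hA; rewrite /binom /psi rmorphB /= -!/(psi _) !psiX img_pos_neg //.
by rewrite subrr.
Qed.

Lemma psi_I f : toric_ideal K (A_mat k) f -> psi f = 0.
Proof.
case=> rs [Hr ->]; rewrite /psi rmorph_sum /=; apply: big1_seq => x /andP[_ hx].
have [u [hu ->]] := Hr x hx.
by have := psi_binom hu; rewrite rmorphM /= /psi => ->; rewrite mulr0.
Qed.

Lemma psi_coef f t : (psi f)@_t = \sum_(m <- msupp f) f@_m * (img m == t)%:R.
Proof.
rewrite /psi /mmap raddf_sum /=; apply: eq_bigr => m _.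
by rewrite mcoeffCM mmap1_img mcoeffX.
Qed.



Definition standard (mf : 'X_{1..n}) :=
  (forall i, (i < k)%N -> mf (ix i) = 0%N /\ mf (ix (2 * k + i)) = 0%N) /\
  (mf (ix (4 * k)) = 0%N \/ exists i, (i < k)%N /\ mf (ix (k + i)) = 0%N).

Lemma stdlex (m mf : 'X_{1..n}) : standard mf -> img m = img mf -> lex_lt m mf -> False.
Proof.
move=> [S1 S2] E.
have R1 : forall t, (t < k)%N ->
  (m (ix t) + m (ix (k + t)) + m (ix (4 * k + 1)) = mf (ix t) + mf (ix (k + t)) + mf (ix (4 * k + 1)))%N.
  move=> t ht; have := congr1 (fun mm : 'X_{1..r} => mm (ir t)) E.
  by rewrite !img_row ?ht //; lia.
have R2 : forall t, (t < k)%N ->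
  (m (ix (2 * k + t)) + m (ix (3 * k + t)) + m (ix (4 * k)) = mf (ix (2 * k + t)) + mf (ix (3 * k + t)) + mf (ix (4 * k)))%N.
  move=> t ht; have := congr1 (fun mm : 'X_{1..r} => mm (ir (k + t))) E.
  rewrite !img_row; try lia.
  rewrite (_ : (k + t < k)%N = false); last by lia.
  rewrite (_ : (k + t < 2 * k)%N = true); last by lia.
  by rewrite (_ : (k + t + k = 2 * k + t)%N); [rewrite (_ : (k + t + 2 * k = 3 * k + t)%N)|]; lia.
have R3 : (m (ix (4 * k)) + m (ix (4 * k + 1)) = mf (ix (4 * k)) + mf (ix (4 * k + 1)))%N.
  have := congr1 (fun mm : 'X_{1..r} => mm (ir (2 * k))) E.
  by rewrite !img_row; try lia; rewrite (_ : (2 * k < k)%N = false) ?ltnn //; lia.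
case/lex_ltP => i [hlt Heq].
have hi := ltn_ord i.
move: hlt; rewrite -(ix_val i) => hlt.
have H j : (j < i)%N -> m (ix j) = mf (ix j).
  by move=> hj; apply: Heq; rewrite ixK //; lia.
set vi := val i in hlt hi H.
case: (ltnP vi k) => c1.
  by have [] := S1 vi c1; lia.
case: (ltnP vi (2 * k)) => c2.
  have := R1 (vi - k)%N ltac:(lia).
  rewrite (_ : (k + (vi - k) = vi)%N); last by lia.
  have := H (vi - k)%N ltac:(lia).
  case: S2 => [z|[l [hl z]]]; first by lia.
  have := R1 l hl; have := H l ltac:(lia); lia.
case: (ltnP vi (3 * k)) => c3.
  have [_] := S1 (vi - 2 * k)%N ltac:(lia).
  by rewrite (_ : (2 * k + (vi - 2 * k) = vi)%N); lia.
have e0 := R1 0%N hk; have h0 := H 0%N ltac:(lia); have hk' := H (k + 0)%N ltac:(lia).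
case: (ltnP vi (4 * k)) => c4.
  have := R2 (vi - 3 * k)%N ltac:(lia).
  rewrite (_ : (3 * k + (vi - 3 * k) = vi)%N); last by lia.
  have := H (2 * k + (vi - 3 * k))%N ltac:(lia).
  have := R3; lia.
case: (eqVneq vi (4 * k)%N) => c5.
  by move: hlt; rewrite c5; lia.
have c6 : vi = (4 * k + 1)%N by lia.
have := H (4 * k)%N ltac:(lia).
by move: hlt; rewrite c6; lia.
Qed.



Lemma mnm1_ix a j : (a < n)%N -> (j < n)%N -> U_(ix a)%MM (ix j) = (a == j).
Proof. by move=> ha hj; rewrite mnm1E -val_eqE /= !ixK. Qed.

Lemma posm_mv a b : pairP a b -> posm (mv a b) = U_(ix a)%MM.
Proof.
move=> hp; have [ab b4 [ha hb]] := pair_lt hp.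
apply/mnmP => j; rewrite -(ix_val j) posmE // mnm1_ix // vat_mv //.
by do ![case: eqP => ?]; rewrite /ppart /=; lia.
Qed.

Lemma negm_mv a b : pairP a b -> negm (mv a b) = U_(ix b)%MM.
Proof.
move=> hp; have [ab b4 [ha hb]] := pair_lt hp.
apply/mnmP => j; rewrite -(ix_val j) negmE // mnm1_ix // vat_mv //.
by do ![case: eqP => ?]; rewrite /ppart /=; lia.
Qed.

Lemma lexU a b : (a < b)%N -> (b < n)%N -> lex_lt U_(ix b)%MM U_(ix a)%MM.
Proof.
move=> ab hb; apply/lex_ltP; exists (ix a); rewrite !mnm1_ix; try lia.
split; first by rewrite eqxx (gtn_eqF ab).
move=> j hj; have ha : (a < n)%N by lia.
rewrite ixK // in hj; rewrite -(ix_val j) !mnm1_ix //; try lia.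
Qed.

Lemma LM_mv a b : pairP a b ->
  is_LM (binom K (mv a b)) U_(ix a)%MM /\ (binom K (mv a b))@_U_(ix a)%MM = 1.
Proof.
move=> hp; have [ab b4 [ha hb]] := pair_lt hp.
rewrite /binom posm_mv // negm_mv //; exact: binom_LM (lexU ab hb).
Qed.

Lemma posm_d3 j : (j < n)%N -> posm d3 (ix j) = ((k <= j < 2 * k) || (j == 4 * k))%N.
Proof.
move=> hj; rewrite posmE // vat_d3E.
do ![case: ifP => ?]; rewrite /ppart /=; lia.
Qed.

Lemma negm_d3 j : (j < n)%N -> negm d3 (ix j) = ((3 * k <= j < 4 * k) || (j == 4 * k + 1))%N.
Proof.
move=> hj; rewrite negmE // vat_d3E.
do ![case: ifP => ?]; rewrite /ppart /=; lia.
Qed.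

Lemma LM_d3 : is_LM (binom K d3) (posm d3) /\ (binom K d3)@_(posm d3) = 1.
Proof.
apply: binom_LM; apply/lex_ltP; exists (ix k).
rewrite posm_d3 ?negm_d3; try lia.
split; first by lia.
move=> j; rewrite -(ix_val j) ixK ?posm_d3 ?negm_d3 //; try lia.
rewrite ixK; lia.
Qed.



Definition pairs : seq (nat * nat) :=
  [seq (i, k + i)%N | i <- iota 0 k] ++ [seq (2 * k + i, 3 * k + i)%N | i <- iota 0 k].

Lemma pairsP a b : ((a, b) \in pairs) <-> pairP a b.
Proof.
rewrite /pairs mem_cat; split.
  case/orP => /mapP [i]; rewrite mem_iota add0n => hi [-> ->].
    by left; exists i.
  by right; exists i.
case=> [[i [hi [-> ->]]]|[i [hi [-> ->]]]]; apply/orP; [left|right];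
  by apply/mapP; exists i; rewrite // mem_iota add0n.
Qed.

Definition Gb : seq {mpoly K[n]} :=
  [seq binom K (mv ab.1 ab.2) | ab <- pairs] ++ [:: binom K d3].

Lemma inGb g : g \in Gb -> g = binom K d3 \/ exists a b, pairP a b /\ g = binom K (mv a b).
Proof.
rewrite mem_cat => /orP[/mapP [[a b] hab ->]|]; last by rewrite inE => /eqP; left.
by right; exists a, b; split => //; apply/pairsP.
Qed.

Lemma mvG a b : pairP a b -> binom K (mv a b) \in Gb.
Proof.
by move=> hp; rewrite mem_cat; apply/orP; left; apply/mapP; exists (a, b) => //; apply/pairsP.
Qed.

Lemma d3G : binom K d3 \in Gb.
Proof. by rewrite mem_cat mem_seq1 eqxx orbT. Qed.

Lemma binom_lat (u : 'cV[int]_n) : A_mat k *m u = 0 -> toric_ideal K (A_mat k) (binom K u).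
Proof.
move=> hu; exists [:: (1, binom K u)]; split.
  by move=> x; rewrite inE => /eqP -> /=; exists u.
by rewrite big_seq1 mul1r.
Qed.

Lemma mdividesP (m1 m2 : 'X_{1..n}) : (forall l, (l < n)%N -> (m1 (ix l) <= m2 (ix l))%N) -> mdivides m1 m2.
Proof. by move=> H; apply/forallP => l; rewrite -(ix_val l); apply: H. Qed.

Lemma not_mdivides (m1 m2 : 'X_{1..n}) l : (l < n)%N -> (m2 (ix l) < m1 (ix l))%N -> ~~ mdivides m1 m2.
Proof. by move=> hl h; apply/negP => /forallP /(_ (ix l)); rewrite leqNgt h. Qed.

Lemma msupp_binom_mv a b mm : pairP a b -> mm \in msupp (binom K (mv a b)) ->
  mm = U_(ix a)%MM \/ mm = U_(ix b)%MM.
Proof.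
move=> hp; have [ab b4 [ha hb]] := pair_lt hp.
rewrite /binom posm_mv // negm_mv // binom_msupp.
  by case/orP => /eqP ->; [left|right].
by rewrite eq_mnm1 -val_eqE /= !ixK // ltn_eqF.
Qed.

Lemma msupp_binom_d3 mm : mm \in msupp (binom K d3) -> mm = posm d3 \/ mm = negm d3.
Proof.
have ne : posm d3 != negm d3.
  apply/eqP => e; have := congr1 (fun m : 'X_{1..n} => m (ix k)) e.
  rewrite posm_d3 ?negm_d3; lia.
by rewrite /binom binom_msupp // => /orP[]/eqP ->; [left|right].
Qed.



Lemma Gb_clause4 g g' : g \in Gb -> g' \in Gb -> g' != g ->
  forall mg', is_LM g' mg' -> forall mm, mm \in msupp g -> ~~ mdivides mg' mm.
Proof.
move=> hg hg' ne mg' hLM mm hmm.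
case: (inGb hg') => [e'|[a' [b' [hp' e']]]]; subst g'.
- have e := LM_uniq hLM LM_d3.1; subst mg'.
  case: (inGb hg) => [e|[a [b [hp e]]]]; subst g; first by rewrite eqxx in ne.
  have [ab b4 [ha hb]] := pair_lt hp.
  apply: (@not_mdivides _ _ (4 * k)%N); first by lia.
  rewrite posm_d3; last by lia.
  by case: (msupp_binom_mv hp hmm) => ->; rewrite mnm1_ix //; try lia;
    rewrite (_ : (_ == _) = false) /=; try lia; rewrite eqxx orbT.
- have [ab' b4' [ha' hb']] := pair_lt hp'.
  have e := LM_uniq hLM (LM_mv hp').1; subst mg'.
  apply: (@not_mdivides _ _ a') => //.
  rewrite mnm1_ix // eqxx.
  case: (inGb hg) => [e|[a [b [hp e]]]]; subst g.
  + have hx : ~~ ((k <= a' < 2 * k) || (a' == 4 * k))%N.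
      by case: hp' => [[i [hi [-> _]]]|[i [hi [-> _]]]]; lia.
    have hy : ~~ ((3 * k <= a' < 4 * k) || (a' == 4 * k + 1))%N.
      by case: hp' => [[i [hi [-> _]]]|[i [hi [-> _]]]]; lia.
    case: (msupp_binom_d3 hmm) => ->; first by rewrite posm_d3 // (negbTE hx).
    by rewrite negm_d3 // (negbTE hy).
  + have [ab b4 [ha hb]] := pair_lt hp.
    case: (msupp_binom_mv hp hmm) => ->; rewrite mnm1_ix //.
      case: eqP => // eaa.
      have u : [|| a == a', a == b', b == a' | b == b'] by rewrite eaa eqxx.
      have [_ ebb] := pair_uniq hp hp' u.
      by subst; rewrite eqxx in ne.
    case: eqP => // eba.
    have u : [|| a == a', a == b', b == a' | b == b'] by rewrite eba eqxx !orbT.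
    have [eaa ebb] := pair_uniq hp hp' u.
    by lia.
Qed.



Lemma Gb_clause2 f : toric_ideal K (A_mat k) f -> f != 0 -> forall mf, is_LM f mf ->
  exists g, exists mg, [/\ g \in Gb, is_LM g mg & mdivides mg mf].
Proof.
move=> hf nzf mf hLM.
case: (pickP (fun i : 'I_k => (0 < mf (ix i))%N || (0 < mf (ix (2 * k + i)))%N)) => [i /orP[h|h] | H0].
- have hp : pairP i (k + i)%N by left; exists i.
  exists (binom K (mv i (k + i))), U_(ix i)%MM; split; first exact: mvG.
    exact: (LM_mv hp).1.
  have hi := ltn_ord i.
  apply: mdividesP => l hl; rewrite mnm1_ix //; try lia.
  by case: eqP => [<-|] //.
- have hp : pairP (2 * k + i)%N (3 * k + i)%N by right; exists i.
  exists (binom K (mv (2 * k + i) (3 * k + i))), U_(ix (2 * k + i))%MM; split; first exact: mvG.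
    exact: (LM_mv hp).1.
  have hi := ltn_ord i.
  apply: mdividesP => l hl; rewrite mnm1_ix //; try lia.
  by case: eqP => [<-|] //.
have H0' : forall i, (i < k)%N -> mf (ix i) = 0%N /\ mf (ix (2 * k + i)) = 0%N.
  move=> i hi; have := H0 (Ordinal hi); rewrite /= => /norP [] ; lia.
case: (boolP ((0 < mf (ix (4 * k)))%N && [forall i : 'I_k, (0 < mf (ix (k + i)))%N])) =>
  [/andP[hp /forallP hy] | hn].
  exists (binom K d3), (posm d3); split; [exact: d3G | exact: LM_d3.1 |].
  apply: mdividesP => l hl; rewrite posm_d3 //.
  case: (boolP (k <= l < 2 * k)%N) => hl2 /=.
    have hl3 : (l - k < k)%N by lia.
    by have := hy (Ordinal hl3); rewrite /= (_ : (k + (l - k) = l)%N) //; lia.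
  by case: eqP => [->|].
exfalso.
have hstd : standard mf.
  split => //.
  move: hn; rewrite negb_and => /orP[h|/forallPn [i h]]; [left|right]; first by lia.
  by exists i; split => //; lia.
have Z := psi_I hf.
have := congr1 (mcoeff (img mf)) Z.
rewrite psi_coef mcoeff0 (bigD1_seq mf) //=; last by case: hLM.
rewrite eqxx mulr1 big1_seq ?addr0.
  by move=> h; case: hLM; rewrite mcoeff_msupp h eqxx.
move=> m /andP[nem hm]; case: eqP => [e|]; last by rewrite mulr0.
have := hLM.2 m hm; rewrite /lex_le (negbTE nem) /= => hlt.
by case: (stdlex hstd e hlt).
Qed.

Lemma Gb_reduced : is_reduced_GB (toric_ideal K (A_mat k)) Gb.
Proof.
split.
  move=> g /inGb [->|[a [b [hp ->]]]]; apply: binom_lat; [exact: d3_lat|exact: mv_lat].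
split; first exact: Gb_clause2.
split; last exact: Gb_clause4.
move=> g /inGb [->|[a [b [hp ->]]]]; first by exists (posm d3); exact: LM_d3.
by exists U_(ix a)%MM; exact: LM_mv.
Qed.

Lemma Rlex_mv a b : pairP a b -> R_lex K (A_mat k) (mv a b).
Proof.
move=> hp; exists Gb; split; first exact: Gb_reduced.
split; first exact: mvG.
by rewrite posm_mv //; exact: (LM_mv hp).1.
Qed.



Lemma posm_neq (d : 'cV[int]_n) : d <> 0 -> posm d != negm d.
Proof.
move=> nz; apply/eqP => e; apply: nz; apply: eq_vat => l hl; rewrite vat0.
have := congr1 (fun m : 'X_{1..n} => m (ix l)) e; rewrite posmE // negmE //.
by have := ppart_diff (vat d l); lia.
Qed.

Lemma Rlex_char (d : 'cV[int]_n) : A_mat k *m d = 0 -> vat d (4 * k) = 0 -> d <> 0 ->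
  R_lex K (A_mat k) d -> exists a b, pairP a b /\ d = mv a b.
Proof.
move=> hA h4 nz [G [[C1 [C2 [C3 C4]]] [hdG hdLM]]].
have pn := posm_neq nz.
have key : forall a b, pairP a b ->
    vat d a = 0 \/ forall l, (l < n)%N -> (posm d (ix l) <= U_(ix a)%MM (ix l))%N.
  move=> a b hp; have [ab b4 [ha hb]] := pair_lt hp.
  have hI := binom_lat (mv_lat hp).
  have [hLa _] := LM_mv hp.
  have nz0 : binom K (mv a b) != 0.
    by apply/eqP => e; move: hLa.1; rewrite e msupp0.
  have [g [mg [hg hLg hdiv]]] := C2 _ hI nz0 _ hLa.
  case: (eqVneq g (binom K d)) => [eg|neg].
    subst g; have e := LM_uniq hLg hdLM; subst mg.
    by right => l hl; move/forallP: hdiv => /(_ (ix l)).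
  left.
  have Hn := C4 _ _ hdG hg neg _ hLg.
  have hpos := Hn _ hdLM.1.
  have hneg : ~~ mdivides mg (negm d).
    by apply: Hn; rewrite /binom binom_msupp // eqxx orbT.
  have Hmg l : (mg l <= U_(ix a)%MM l)%N by move/forallP: hdiv => /(_ l).
  case: (ltrgtP (vat d a) 0) => // h; exfalso.
    move/negP: hneg; apply; apply/forallP => l; apply: leq_trans (Hmg l) _.
    rewrite mnm1E; case: eqP => //= <-; rewrite negmE //; rewrite /ppart; lia.
  move/negP: hpos; apply; apply/forallP => l; apply: leq_trans (Hmg l) _.
  rewrite mnm1E; case: eqP => //= <-; rewrite posmE //; rewrite /ppart; lia.
have [h5 HP] := fiber_pairs hA h4.
have [a [b [hp hna]]] := nz_pair hA h4 nz.
have [ab b4 [ha hb]] := pair_lt hp.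
case: (key a b hp) => [z|Hle]; first by rewrite z eqxx in hna.
have Vle : forall l, (l < n)%N -> vat d l <= (a == l)%:R.
  move=> l hl; have := Hle l hl; rewrite posmE // mnm1_ix //.
  by case: eqP => _ /=; rewrite /ppart; lia.
exists a, b; split => //.
apply: eq_vat => l hl; rewrite vat_mv //.
have nab : (a == b) = false by apply/eqP; lia.
have nba : (b == a) = false by apply/eqP; lia.
case: (cover hl) => [el|[el|[a' [b' [hp' el]]]]].
- rewrite el h4; have -> : (4 * k == a)%N = false by apply/eqP; lia.
  by have -> : (4 * k == b)%N = false by apply/eqP; lia.
- rewrite el h5; have -> : (4 * k + 1 == a)%N = false by apply/eqP; lia.
  by have -> : (4 * k + 1 == b)%N = false by apply/eqP; lia.
- have [ab' b4' [ha' hb']] := pair_lt hp'.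
  have s' := HP a' b' hp'.
  have sab := HP a b hp.
  have va := Vle a ha; have vb := Vle b hb; have va' := Vle a' ha'; have vb' := Vle b' hb'.
  case: (boolP [|| a == a', a == b', b == a' | b == b']) => hu.
    have [ea eb] := pair_uniq hp hp' hu; subst a' b'.
    move: va vb; rewrite eqxx nab => va vb.
    by case: el => ->; rewrite ?eqxx ?nab ?nba /=; lia.
  move: hu; rewrite !negb_or => /and4P[n1 n2 n3 n4].
  move: va' vb'; rewrite (negbTE n1) (negbTE n2) /= => va' vb'.
  case: el => ->.
    by rewrite (eq_sym a' a) (negbTE n1) (eq_sym a' b) (negbTE n3) /=; lia.
  by rewrite (eq_sym b' a) (negbTE n2) (eq_sym b' b) (negbTE n4) /=; lia.
Qed.



Lemma main_sec (b : 'cV[int]_(2 * k + 1)) (s : int) :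
  forall u v : 'cV[int]_n, C_s b s u -> C_s b s v ->
    (fiber_adj (A_mat k) b (graver (A_mat k)) u v <->
     fiber_adj (A_mat k) b (R_lex K (A_mat k)) u v).
Proof.
move=> u v [[_ Au] su] [[_ Av] sv].
have hA1 : A_mat k *m (u - v) = 0 by rewrite mulmxBr Au Av subrr.
have hA2 : A_mat k *m (v - u) = 0 by rewrite mulmxBr Au Av subrr.
have h41 : vat (u - v) (4 * k) = 0 by rewrite vatB su sv subrr.
have h42 : vat (v - u) (4 * k) = 0 by rewrite vatB su sv subrr.
split; move=> [Fu [Fv [ne H]]]; do 3 (split => //).
- case: H => H.
    have [a [b' [hp [e|e]]]] := graver_char hA1 h41 H.
      by left; rewrite e; exact: Rlex_mv.
    by right; rewrite -opprB e opprK; exact: Rlex_mv.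
  have [a [b' [hp [e|e]]]] := graver_char hA2 h42 H.
    by right; rewrite e; exact: Rlex_mv.
  by left; rewrite -opprB e opprK; exact: Rlex_mv.
- have nz1 : u - v <> 0 by move/eqP; rewrite subr_eq0 => /eqP.
  have nz2 : v - u <> 0 by move/eqP; rewrite subr_eq0 => /eqP /esym.
  case: H => H.
    have [a [b' [hp e]]] := Rlex_char hA1 h41 nz1 H.
    by left; rewrite e; exact: graver_mv.
  have [a [b' [hp e]]] := Rlex_char hA2 h42 nz2 H.
  by right; rewrite e; exact: graver_mv.
Qed.

End Basics.

Theorem lemma5 (K : fieldType) (k : nat) (hk : (1 <= k)%N)
  (b : 'cV[int]_(2 * k + 1)) (s : int)
  (hl : l_b b <= s) (hu : s <= u_b b) :
  forall u v : 'cV[int]_(4 * k + 2), C_s b s u -> C_s b s v ->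
    (fiber_adj (A_mat k) b (graver (A_mat k)) u v <->
     fiber_adj (A_mat k) b (R_lex K (A_mat k)) u v).
Proof. exact: (@main_sec k hk K b s). Qed.
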